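(* Let $(\hat T,\hat\ell)$ be a vine decomposition of a graph $G=(V,E)$, with labels $\hat V_s$. Let $X\subseteq V$ and let $C$ be the vertex set of a connected component of $G-X$. Suppose there is a node $t$ of $\hat T$ such that $\hat V_t\cap C=\emptyset$ and every set separating $X$ from $\hat V_t$ in $G$ has at least $|X|$ vertices. Then there is a vine decomposition $(T,\ell)$ of the induced subgraph $G[X\cup C]$ with the same tree $T=\hat T$ and labels $V_s$ such that: (1) $V_t=X$; (2) $V_s\subseteq\hat V_s$ for every leaf $s\neq t$ of $T$; (3) $|V_s|\le|\hat V_s|$ for every node $s$ of $T$.
   Context: Vine decomposition of a graph $H=(W,F)$: a pair $(T,\ell)$ where $T$ is a tree and $\ell$ assigns to each node $t$ of $T$ a set $V_t\subseteq W$, such that, writing $T_v=\{t: v\in V_t\}$: (i) for each $v\in W$, $T_v$ is nonempty and induces a connected subtree of $T$; (ii) for each edge $uv\in F$, the subtrees $T_u$ and $T_v$ either share a node or some node of $T_u$ is adjacent in $T$ to some node of $T_v$. A set $S\subseteq V$ separates $A$ from $B$ if every path in $G$ (including one-vertex paths) from a vertex of $A$ to a vertex of $B$ contains a vertex of $S$. *)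

(* Defs.v *)
From mathcomp Require Import all_boot.
Set Implicit Arguments. Unset Strict Implicit. Unset Printing Implicit Defensive.

Definition simple_graph (V : finType) (e : rel V) : Prop :=
  symmetric e /\ irreflexive e.

Definition restrict (V : finType) (e : rel V) (S : {set V}) : rel V :=
  [rel x y | [&& e x y, x \in S & y \in S]].

(* S induces a connected subgraph of (V,e) (S is nonempty is required separately). *)
Definition induces_connected (V : finType) (e : rel V) (S : {set V}) : Prop :=
  forall a b, a \in S -> b \in S -> connect (restrict e S) a b.

Definition is_tree (N : finType) (tN : rel N) : Prop :=
  [/\ 0 < #|N|, simple_graph tN,
      (forall x y, connect tN x y) &
      ~ (exists c : seq N, [/\ 3 <= size c, uniq c & cycle tN c])].

Definition leaf (N : finType) (tN : rel N) (s : N) : bool :=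
  #|[set u | tN s u]| == 1.

(* Vine decomposition (tree tN, labels lab) of the graph H = (W, e restricted to W).
   Labels are subsets of W. *)
Definition vine_decomp (N V : finType) (tN : rel N) (W : {set V}) (e : rel V)
    (lab : N -> {set V}) : Prop :=
  [/\ forall s, lab s \subset W,
      forall v, v \in W ->
        (exists s, v \in lab s) /\ induces_connected tN [set s | v \in lab s] &
      forall u v, u \in W -> v \in W -> e u v ->
        exists s s', [/\ u \in lab s, v \in lab s' & (s == s') || tN s s']].

(* S separates A from B in (V,e): every path (including one-vertex paths)
   from a vertex of A to a vertex of B contains a vertex of S. *)
Definition separates (V : finType) (e : rel V) (S A B : {set V}) : Prop :=
  forall (x : V) (p : seq V), x \in A -> path e x p -> last x p \in B ->
    exists2 y, y \in x :: p & y \in S.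

Definition component_of_minus (V : finType) (e : rel V) (X C : {set V}) : Prop :=
  exists2 x, x \notin X & C = [set y | connect (restrict e (~: X)) x y].

(* Main.v *)
Require Import Defs.
From mathcomp Require Import all_boot.
From Stdlib Require Import Classical.
Set Implicit Arguments. Unset Strict Implicit. Unset Printing Implicit Defensive.

Lemma pre_split (V : eqType) (r : rel V) a p v :
  v \in a :: p -> path r a p -> exists p1, path r a p1 /\ last a p1 = v.
Proof.
elim: p a => [|c p IH] a /=.
  by rewrite in_cons in_nil orbF => /eqP -> _; exists [::].
rewrite in_cons => /orP [/eqP -> _| Hv /andP [Hac Hp]]; first by exists [::].
have [p1 [H1 H2]] := IH c Hv Hp.
by exists (c :: p1) => /=; rewrite Hac H1.
Qed.

Lemma suf_split (V : eqType) (r : rel V) b q v :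
  v \in b :: q -> path r b q -> exists q2, path r v q2 /\ last v q2 = last b q.
Proof.
elim: q b => [|c q IH] b /=.
  by rewrite in_cons in_nil orbF => /eqP -> _; exists [::].
rewrite in_cons => /orP [/eqP -> Hp| Hv /andP [Hac Hp]].
  by exists (c :: q); rewrite /= Hp.
exact: IH.
Qed.

Lemma prefix_to (V : finType) (X : {set V}) (r : rel V) x p :
  path r x p -> (exists2 w, w \in x :: p & w \in X) ->
  exists q, [/\ path [rel u v | r u v && (u \notin X)] x q, last x q \in X &
                {subset x :: q <= x :: p}].
Proof.
elim: p x => [|c p IH] x /=.
  move=> _ [w]; rewrite in_cons in_nil orbF => /eqP -> Hx.
  by exists [::]; split.
move=> /andP [Hxc Hp] [w Hw HwX].
case HxX: (x \in X).
  by exists [::]; split => // z; rewrite in_cons in_nil orbF => /eqP ->; rewrite in_cons eqxx.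
have Hw' : w \in c :: p.
  move: Hw; rewrite in_cons => /orP [/eqP E|//]; by rewrite -E HwX in HxX.
have [q [H1 H2 H3]] := IH c Hp (ex_intro2 _ _ w Hw' HwX).
exists (c :: q); split => //=.
  by rewrite Hxc HxX H1.
move=> z; rewrite in_cons => /orP [/eqP ->|Hz]; first by rewrite in_cons eqxx.
by rewrite in_cons (H3 z Hz) orbT.
Qed.

Lemma path_notin_tgt (V : eqType) (r : rel V) (Y : pred V) x p :
  path r x p -> (forall w, w \in p -> ~~ Y w) -> path [rel u v | r u v && ~~ Y v] x p.
Proof.
elim: p x => [|c p IH] x //= /andP [Hxc Hp] H.
rewrite Hxc (H c (mem_head _ _)) /=; apply: IH => // w Hw.
by apply: H; rewrite in_cons Hw orbT.
Qed.

Lemma suffix_from (V : finType) (Y : {set V}) (r : rel V) x p :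
  path r x p -> (exists2 w, w \in x :: p & w \in Y) ->
  exists y q, [/\ y \in Y, path [rel u v | r u v && (v \notin Y)] y q,
                 last y q = last x p & {subset y :: q <= x :: p}].
Proof.
elim: p x => [|c p IH] x /=.
  move=> _ [w]; rewrite in_cons in_nil orbF => /eqP -> Hx.
  by exists x, [::]; split.
move=> /andP [Hxc Hp] [w Hw HwY].
case Hh: (has (mem Y) (c :: p)).
  have [w' Hw' HwY'] := hasP Hh.
  have [y [q [H1 H2 H3 H4]]] := IH c Hp (ex_intro2 _ _ w' Hw' HwY').
  exists y, q; split => // z Hz.
  by rewrite in_cons (H4 z Hz) orbT.
have HxY : x \in Y.
  move: Hw; rewrite in_cons => /orP [/eqP <-|Hw] //.
  by move/hasPn: Hh => /(_ w Hw) /=; rewrite HwY.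
exists x, (c :: p); split => //.
apply: (@path_notin_tgt _ r (mem Y)) => /=; first by rewrite Hxc Hp.
by move=> z Hz; move/hasPn: Hh => /(_ z Hz).
Qed.

Lemma K1 (V : finType) (rr : rel V) (X : {set V}) a p :
  path [rel u v | rr u v && (u \notin X)] a p ->
  forall v, v \in a :: p -> v \in X -> v = last a p.
Proof.
elim: p a => [|c p IH] a /=.
  by move=> _ v; rewrite in_cons in_nil orbF => /eqP.
move=> /andP [/andP [_ HaX] Hp] v; rewrite in_cons => /orP [/eqP ->|Hv] HvX.
  by rewrite HvX in HaX.
exact: IH.
Qed.

Lemma tgt_notin (V : finType) (rr : rel V) (Y : {set V}) b q :
  path [rel u v | rr u v && (v \notin Y)] b q -> forall w, w \in q -> w \notin Y.
Proof.
elim: q b => [|c q IH] b //= /andP [/andP [_ HcY] Hp] w.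
rewrite in_cons => /orP [/eqP ->|Hw] //; exact: IH Hp w Hw.
Qed.

Lemma K2 (V : finType) (rr : rel V) (Y : {set V}) b q :
  path [rel u v | rr u v && (v \notin Y)] b q ->
  forall v, v \in b :: q -> v \in Y -> v = b.
Proof.
move=> Hp v; rewrite in_cons => /orP [/eqP ->|Hv] HvY //.
by have := tgt_notin Hp Hv; rewrite HvY.
Qed.

Definition arcs (V : finType) (r : rel V) : {set V * V} := [set p | r p.1 p.2].

Definition linked (V : finType) (r : rel V) (A B : {set V}) (k : nat) : Prop :=
  exists (D : {set V}) (f : V -> seq V), [/\ D \subset A, #|D| = k,
    (forall a, a \in D -> path r a (f a) /\ last a (f a) \in B) &
    (forall a b v, a \in D -> b \in D -> a != b -> v \in a :: f a -> v \in b :: f b -> False)].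

Lemma linked_noarc (V : finType) (r : rel V) A B k :
  (forall u v, ~~ r u v) -> (forall S, separates r S A B -> k <= #|S|) -> linked r A B k.
Proof.
move=> Hno Hsep.
have Hk : k <= #|A :&: B|.
  apply: Hsep => x0 [|c p] Hx0 /= Hp Hl.
    by exists x0; rewrite ?inE ?eqxx // Hx0.
  by rewrite (negbTE (Hno x0 c)) in Hp.
exists [set z in take k (enum (A :&: B))], (fun _ => [::]); split.
- apply/subsetP => z; rewrite inE => /mem_take; rewrite mem_enum inE; by case/andP.
- rewrite cardsE; move/card_uniqP: (take_uniq k (enum_uniq (mem (A :&: B)))) => ->.
  by rewrite size_takel // -cardE.
- move=> a; rewrite inE => /mem_take; rewrite mem_enum inE /= => /andP [_ ->]; by [].
- move=> a b v _ _ Hab; rewrite !in_cons !in_nil !orbF => /eqP -> /eqP E.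
  by rewrite E eqxx in Hab.
Qed.

Lemma menger (V : finType) n : forall (r : rel V) (A B : {set V}) k,
  #|arcs r| <= n -> (forall S, separates r S A B -> k <= #|S|) -> linked r A B k.
Proof.
elim: n => [|n IH] r A B k Hn Hsep.
  apply: linked_noarc Hsep => u v; apply/negP => Huv.
  have : (u, v) \in arcs r by rewrite inE.
  by move: Hn; rewrite leqn0 cards_eq0 => /eqP ->; rewrite inE.
case: (set_0Vmem (arcs r)) => [H0 | [[x y] Hxy]].
  apply: linked_noarc Hsep => u v; apply/negP => Huv.
  have : (u, v) \in arcs r by rewrite inE.
  by rewrite H0 inE.
rewrite inE /= in Hxy.
set r' := [rel u v | r u v && ((u, v) != (x, y))].
have sub_r' : subrel r' r by move=> u v /andP [].
have Hr'n : #|arcs r'| <= n.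
  rewrite -ltnS; apply: leq_trans Hn; apply: proper_card; apply/properP; split.
    by apply/subsetP => p; rewrite !inE => /andP [].
  by exists (x, y); rewrite !inE //= eqxx andbF.
destruct (classic (forall S, separates r' S A B -> k <= #|S|)) as [H|H].
  have [D [f [H1 H2 H3 H4]]] := IH r' A B k Hr'n H.
  exists D, f; split => // a Ha; have [? ?] := H3 a Ha; split => //.
  by apply: (sub_path sub_r').
apply not_all_ex_not in H as [S HS]; apply imply_to_and in HS as [HS HkS].
move/negP: HkS; rewrite -ltnNge => HkS.
set X := x |: S. set Y := y |: S.
have sepX : separates r X A B.
  move=> x0 p Hx0 Hp Hl; case Hx: (x \in x0 :: p).
    by exists x => //; rewrite setU11.
  have Hp' : path r' x0 p.
    apply: (@sub_in_path _ (predC1 x)) Hp.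
      move=> u v Hu _ /= Huv; rewrite Huv /=; apply/negP => /eqP [Eu _].
      by move: Hu; rewrite inE Eu eqxx.
    apply/allP => w Hw /=; apply/eqP => E; by rewrite -E Hw in Hx.
  have [w Hw HwS] := HS x0 p Hx0 Hp' Hl; exists w => //; by rewrite inE HwS orbT.
have sepY : separates r Y A B.
  move=> x0 p Hx0 Hp Hl; case Hy: (y \in x0 :: p).
    by exists y => //; rewrite setU11.
  have Hp' : path r' x0 p.
    apply: (@sub_in_path _ (predC1 y)) Hp.
      move=> u v _ Hv /= Huv; rewrite Huv /=; apply/negP => /eqP [_ Ev].
      by move: Hv; rewrite inE Ev eqxx.
    apply/allP => w Hw /=; apply/eqP => E; by rewrite -E Hw in Hy.
  have [w Hw HwS] := HS x0 p Hx0 Hp' Hl; exists w => //; by rewrite inE HwS orbT.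
have HkX := Hsep X sepX; have HkY := Hsep Y sepY.
have xS : x \notin S.
  apply/negP => HxS; move: HkX; rewrite /X cardsU1 HxS /= add0n => H.
  by move: (leq_ltn_trans H HkS); rewrite ltnn.
have yS : y \notin S.
  apply/negP => HyS; move: HkY; rewrite /Y cardsU1 HyS /= add0n => H.
  by move: (leq_ltn_trans H HkS); rewrite ltnn.
have cX : #|X| = k.
  apply/eqP; rewrite eqn_leq HkX andbT /X cardsU1 xS add1n; exact: HkS.
have cY : #|Y| = k.
  apply/eqP; rewrite eqn_leq HkY andbT /Y cardsU1 yS add1n; exact: HkS.
have SX : S \subset X by apply: subsetUr.
have SY : S \subset Y by apply: subsetUr.
set r1 := [rel u v | r' u v && (u \notin X)].
set r2 := [rel u v | r' u v && (v \notin Y)].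
have sub1 : subrel r1 r by move=> u v /andP [/sub_r' ->].
have sub2 : subrel r2 r by move=> u v /andP [/sub_r' ->].
have Hr1n : #|arcs r1| <= n.
  apply: leq_trans Hr'n; apply: subset_leq_card; apply/subsetP => p.
  by rewrite !inE => /andP [].
have Hr2n : #|arcs r2| <= n.
  apply: leq_trans Hr'n; apply: subset_leq_card; apply/subsetP => p.
  by rewrite !inE => /andP [].
have sep1 : forall T, separates r1 T A X -> k <= #|T|.
  move=> T HT; apply: Hsep => x0 p Hx0 Hp Hl.
  have [q [Hq HqX Hsub]] := prefix_to Hp (sepX x0 p Hx0 Hp Hl).
  have Hq1 : path r1 x0 q.
    apply: sub_path Hq => u v /= /andP [Huv Hu]; rewrite Hu Huv andbT /=.
    apply/negP => /eqP [Eu _]; by rewrite Eu /X setU11 in Hu.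
  have [w Hw HwT] := HT x0 q Hx0 Hq1 HqX; exists w => //; exact: Hsub.
have sep2 : forall T, separates r2 T Y B -> k <= #|T|.
  move=> T HT; apply: Hsep => x0 p Hx0 Hp Hl.
  have [y0 [q [Hy0 Hq Hlq Hsub]]] := suffix_from Hp (sepY x0 p Hx0 Hp Hl).
  have Hq1 : path r2 y0 q.
    apply: sub_path Hq => u v /= /andP [Huv Hv]; rewrite Hv Huv andbT /=.
    apply/negP => /eqP [_ Ev]; by rewrite Ev /Y setU11 in Hv.
  have [w Hw HwT] := HT y0 q Hy0 Hq1 (eq_ind_r (fun z => z \in B) Hl Hlq); exists w => //; exact: Hsub.
have [D1 [f [D1A cD1 Hf Hdf]]] := IH r1 A X k Hr1n sep1.
have [D2 [g [D2Y cD2 Hg Hdg]]] := IH r2 Y B k Hr2n sep2.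
have D2E : D2 = Y by apply/eqP; rewrite eqEcard D2Y cD2 cY leqnn.
rewrite D2E in Hg Hdg.
set sg := fun z => if z == x then y else z.
have sgY : forall z, z \in X -> sg z \in Y.
  move=> z; rewrite /sg /X /Y !inE => /orP [/eqP ->|Hz]; first by rewrite eqxx /= eqxx.
  by case: (z == x); rewrite /= ?eqxx ?Hz ?orbT.
have cross : forall a b v, a \in D1 -> v \in a :: f a -> v \notin S ->
    b \in Y -> v \in b :: g b -> False.
  move=> a b v Ha Hv HvS Hb Hvb.
  have [p1 [Hp1 Hl1]] := pre_split Hv (Hf a Ha).1.
  have [q2 [Hq2 Hl2]] := suf_split Hvb (Hg b Hb).1.
  have Hsr1 : subrel r1 r' by move=> u v' /andP [].
  have Hsr2 : subrel r2 r' by move=> u v' /andP [].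
  have Hpath : path r' a (p1 ++ q2).
    by rewrite cat_path Hl1 (sub_path Hsr1 Hp1) (sub_path Hsr2 Hq2).
  have Hlast : last a (p1 ++ q2) \in B by rewrite last_cat Hl1 Hl2; exact: (Hg b Hb).2.
  have [w] := HS a _ (subsetP D1A a Ha) Hpath Hlast.
  rewrite -cat_cons mem_cat => /orP [Hw|Hw] HwS.
    have := K1 Hp1 Hw (subsetP SX w HwS); rewrite Hl1 => E.
    by rewrite -E HwS in HvS.
  have := K2 Hq2 (v := w); rewrite in_cons Hw orbT => /(_ isT (subsetP SY w HwS)) E.
  by rewrite -E HwS in HvS.
exists D1, (fun a => f a ++ (if last a (f a) == x then y :: g y else g (last a (f a)))).
have lastX : forall a, a \in D1 -> last a (f a) \in X by move=> a /Hf [].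
have memF : forall a v, v \in a :: (f a ++ (if last a (f a) == x then y :: g y
                                              else g (last a (f a)))) ->
    v \in a :: f a \/ v \in sg (last a (f a)) :: g (sg (last a (f a))).
  move=> a v; rewrite -cat_cons mem_cat => /orP [H|H]; first by left.
  right; rewrite /sg; case: eqP H => _ // H; by rewrite in_cons H orbT.
split => //.
- move=> a Ha; have [Hp Hl] := Hf a Ha; rewrite cat_path last_cat (sub_path sub1 Hp) /=.
  have HlX := lastX a Ha.
  case: eqP => [Ez | Nz] /=.
    have [Hgy Hgl] := Hg y (setU11 _ _).
    by rewrite Ez Hxy (sub_path sub2 Hgy).
  have HzY : last a (f a) \in Y.
    by move: HlX; rewrite /X /Y !inE => /orP [/eqP E|->]; [by [] | rewrite orbT].
  have [Hgy Hgl] := Hg _ HzY; by rewrite (sub_path sub2 Hgy).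
- move=> a b v Ha Hb Hab /memF Hva /memF Hvb.
  set z := last a (f a) in Hva Hvb. set z' := last b (f b) in Hva Hvb.
  have HzX : z \in X := lastX a Ha. have Hz'X : z' \in X := lastX b Hb.
  have zz' : z != z'.
    apply/negP => /eqP E; apply: (Hdf a b z Ha Hb Hab); first exact: mem_last.
    rewrite E; exact: mem_last.
  have half : forall a b, a \in D1 -> b \in D1 -> a != b ->
      v \in a :: f a -> v \in sg (last b (f b)) :: g (sg (last b (f b))) -> False.
    move=> a0 b0 Ha0 Hb0 Hab0 H1 H2.
    have Hsg := sgY _ (lastX b0 Hb0).
    case HvS: (v \in S).
      have E1 := K1 (Hf a0 Ha0).1 H1 (subsetP SX v HvS).
      have E2 := K2 (Hg _ Hsg).1 H2 (subsetP SY v HvS).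
      move: E2; rewrite /sg; case: eqP => Hbx E2.
        by rewrite -E2 HvS in yS.
      apply: (Hdf a0 b0 v Ha0 Hb0 Hab0 H1); rewrite E2; exact: mem_last.
    exact: (cross a0 _ v Ha0 H1 (negbT HvS) Hsg H2).
  case: Hva => Hva; case: Hvb => Hvb.
  + exact: (Hdf a b v Ha Hb Hab).
  + exact: (half a b).
  + by apply: (half b a) => //; rewrite eq_sym.
  + case E: (sg z == sg z').
      exfalso; move: E; rewrite /sg.
      case Ezx: (z == x); case Ez'x: (z' == x) => /eqP E.
      * by rewrite (eqP Ezx) (eqP Ez'x) eqxx in zz'.
      * move: Hz'X; rewrite /X !inE Ez'x /= -E => HyS; by rewrite HyS in yS.
      * move: HzX; rewrite /X !inE Ezx /= E => HyS; by rewrite HyS in yS.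
      * by rewrite E eqxx in zz'.
    exact: (Hdg _ _ v (sgY _ HzX) (sgY _ Hz'X) (negbT E)).
Qed.

Lemma conn_sym (T : finType) (rr : rel T) :
  symmetric rr -> forall a b, connect rr a b -> connect rr b a.
Proof.
move=> Hs a b H.
rewrite -(@eq_connect _ [rel x y | rr y x]); last by move=> x y /=; rewrite Hs.
by have := connect_rev rr b a; rewrite /= => ->.
Qed.

Lemma conn_mono (T : finType) (rr : rel T) (A B : {set T}) a b :
  A \subset B -> connect (restrict rr A) a b -> connect (restrict rr B) a b.
Proof.
move=> AB; apply: connect_sub => u v /= /and3P [H1 H2 H3]; apply: connect1.
by apply/and3P; split => //; apply: (subsetP AB).
Qed.

Lemma restrict_sym (T : finType) (rr : rel T) (A : {set T}) :
  symmetric rr -> symmetric (restrict rr A).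
Proof.
move=> Hs u v; apply/and3P/and3P => [] [H1 H2 H3]; split => //; by rewrite Hs.
Qed.

Lemma union_conn (N V : finType) (tN : rel N) (hat : N -> {set V}) (e : rel V) :
  symmetric tN ->
  (forall v, induces_connected tN [set s | v \in hat s]) ->
  (forall u v, e u v -> exists s s', [/\ u \in hat s, v \in hat s' & (s == s') || tN s s']) ->
  forall a p, path e a p ->
  forall s s', a \in hat s' -> s \in [set s | has (fun w => w \in hat s) (a :: p)] ->
  connect (restrict tN [set s | has (fun w => w \in hat s) (a :: p)]) s' s.
Proof.
move=> Hsym Hconn Hedge a p; elim: p a => [|c p IH] a Hp s s' Hs' Hs.
  apply: (@conn_mono _ _ [set s | a \in hat s]).
    by apply/subsetP => z; rewrite !inE /= orbF.
  by apply: Hconn; rewrite inE //; move: Hs; rewrite !inE /= orbF.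
move: Hp => /= /andP [Hac Hp].
have sub1 : [set s | a \in hat s] \subset
    [set s | has (fun w => w \in hat s) [:: a, c & p]].
  by apply/subsetP => z; rewrite !inE /= => ->.
move: Hs; rewrite inE /= => /orP [Has|Hs].
  apply: conn_mono sub1 _; apply: Hconn; by rewrite inE.
have [s1 [s2 [H1 H2 H12]]] := Hedge a c Hac.
have sub2 : [set s | has (fun w => w \in hat s) (c :: p)] \subset
    [set s | has (fun w => w \in hat s) [:: a, c & p]].
  by apply/subsetP => z; rewrite !inE /= => ->; rewrite orbT.
apply: (@connect_trans _ _ s1).
  apply: conn_mono sub1 _; apply: Hconn; by rewrite inE.
apply: (@connect_trans _ _ s2).
  case/orP: H12 => [/eqP ->|H12] //.
  apply: connect1; apply/and3P; split => //; rewrite !inE /= ?H1 //.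
  by rewrite H2 orbT.
apply: conn_mono sub2 _; apply: IH => //; by rewrite inE.
Qed.

Lemma union_conn2 (N V : finType) (tN : rel N) (hat : N -> {set V}) (e : rel V) :
  symmetric tN ->
  (forall v, induces_connected tN [set s | v \in hat s]) ->
  (forall v, exists s, v \in hat s) ->
  (forall u v, e u v -> exists s s', [/\ u \in hat s, v \in hat s' & (s == s') || tN s s']) ->
  forall a p, path e a p ->
  induces_connected tN [set s | has (fun w => w \in hat s) (a :: p)].
Proof.
move=> Hsym Hconn Hex Hedge a p Hp s1 s2 H1 H2.
have [s' Hs'] := Hex a.
apply: (@connect_trans _ _ s').
  apply: (conn_sym (restrict_sym _ Hsym)).
  exact: (@union_conn _ _ _ _ _ Hsym Hconn Hedge a p Hp s1 s' Hs' H1).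
exact: (@union_conn _ _ _ _ _ Hsym Hconn Hedge a p Hp s2 s' Hs' H2).
Qed.

Lemma trim_path (N : finType) (tN : rel N) (U T' : {set N}) :
  symmetric tN ->
  (forall s, s \in U -> ~~ leaf tN s -> s \in T') ->
  forall a p, a \in T' -> path (restrict tN U) a p -> uniq (a :: p) ->
  last a p \in T' -> path (restrict tN T') a p.
Proof.
move=> Hsym Hin a p; elim: p a => [|c p IH] a //= HaT /andP [/and3P [Hac HaU HcU] Hp] Hu Hl.
have HcT : c \in T'.
  case: p Hp Hu Hl {IH} => [|d p] Hp Hu Hl; first by [].
  apply: Hin => //.
  move: Hp => /= /andP [/and3P [Hcd _ _] _].
  have Had : a != d.
    by move: Hu; rewrite cons_uniq !in_cons !negb_or => /andP [/andP [_ /andP [H _]] _].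
  rewrite /leaf; apply/negP => /eqP H1.
  have : #|[set a; d]| <= #|[set u | tN c u]|.
    apply: subset_leq_card; apply/subsetP => z; rewrite !inE => /orP [/eqP ->|/eqP ->] //.
    by rewrite Hsym.
  by rewrite H1 cards2 Had.
apply/andP; split; first by apply/and3P.
apply: IH => //.
by move: Hu; rewrite cons_uniq => /andP [].
Qed.

Lemma trim (N : finType) (tN : rel N) (U T' : {set N}) :
  symmetric tN -> induces_connected tN U -> T' \subset U ->
  (forall s, s \in U -> ~~ leaf tN s -> s \in T') -> induces_connected tN T'.
Proof.
move=> Hs Hc sub Hin a b Ha Hb.
move: (Hc a b (subsetP sub a Ha) (subsetP sub b Hb)) => /connectP [p Hp Eb]; subst b.
case: (shortenP Hp) Hb => p' Hp' Hu _ Hb.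
apply/connectP; exists p' => //.
exact: (trim_path Hs Hin Ha Hp' Hu Hb).
Qed.

Lemma last_in (V : finType) (e : rel V) (S : {set V}) a p :
  a \in S -> path (restrict e S) a p -> last a p \in S.
Proof.
elim: p a => [|c p IH] a //= Ha /andP [/and3P [_ _ Hc] Hp]; exact: IH.
Qed.

Theorem lemma2p8 (V N : finType) (e : rel V) (tN : rel N)
    (hat : N -> {set V}) (X C : {set V}) (t : N) :
  simple_graph e ->
  is_tree tN ->
  vine_decomp tN [set: V] e hat ->
  component_of_minus e X C ->
  hat t :&: C = set0 ->
  (forall S : {set V}, separates e S X (hat t) -> #|X| <= #|S|) ->
  exists lab : N -> {set V},
    [/\ vine_decomp tN (X :|: C) e lab,
        lab t = X,
        (forall s, leaf tN s -> s != t -> lab s \subset hat s) &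
        (forall s, #|lab s| <= #|hat s|)].
Proof.
move=> He Htree [Hv1 Hv2 Hv3] [x0 Hx0X HC] HtC Hsep.
have Hsym : symmetric tN by case: Htree => _ [].
have CnX : forall v, v \in C -> v \notin X.
  move=> v; rewrite HC inE => /connectP [p Hp ->].
  have := @last_in V e (~: X) x0 p; rewrite !inE; apply => //.
have Cclosed : forall u v, u \in C -> e u v -> v \notin X -> v \in C.
  move=> u v Hu Huv Hv; move: (Hu); rewrite HC !inE => Hc.
  apply: connect_trans Hc (connect1 _); apply/and3P; split => //; rewrite inE //; exact: CnX.
set r := [rel u v | e u v && (v \notin X)].
have sepr : forall S, separates r S X (hat t) -> #|X| <= #|S|.
  move=> S HS; apply: Hsep => y0 p Hy0 Hp Hl.
  have [y [q [Hy Hq Hlq Hsub]]] := suffix_from Hp (ex_intro2 _ _ y0 (mem_head _ _) Hy0).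
  have [w Hw HwS] := HS y q Hy Hq (eq_ind_r (fun z => z \in hat t) Hl Hlq).
  by exists w => //; apply: Hsub.
have [D [f [DX cD Hf Hdf]]] := @menger V _ r X (hat t) #|X| (leqnn _) sepr.
have DE : D = X by apply/eqP; rewrite eqEcard DX cD leqnn.
rewrite DE in Hf Hdf.
have avoidC : forall a w, a \in X -> w \in a :: f a -> w \notin C.
  move=> a w Ha Hw; apply/negP => HwC.
  have [Hp Hl] := Hf a Ha.
  have [q [Hq Hlq]] := suf_split Hw Hp.
  have : last w q \in C.
    move: Hw Hp Hlq => _ _ _; elim: q w Hq HwC => [|c q IH] w //= /andP [/andP [Hwc HcX] Hq] HwC.
    apply: IH Hq _; exact: Cclosed HwC Hwc HcX.
  rewrite Hlq => HlC.
  have : last a (f a) \in hat t :&: C by rewrite inE Hl HlC.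
  by rewrite HtC inE.
pose lab := fun s => if leaf tN s && (s != t) then hat s :&: (X :|: C)
   else (hat s :&: C) :|: [set x in X | has (fun w => w \in hat s) (x :: f x)].
have inlab : forall v s, v \in X :|: C -> v \in hat s -> v \in lab s.
  move=> v s Hv Hvs; rewrite /lab; case: ifP => _; first by rewrite inE Hvs Hv.
  move: Hv; rewrite inE => /orP [HvX|HvC]; last by rewrite !inE Hvs HvC.
  apply/setUP; right; rewrite inE HvX andTb; apply/hasP; exists v => //; exact: mem_head.
exists lab; split.
- split.
  + move=> s; rewrite /lab; case: ifP => _; first exact: subsetIr.
    apply/subsetP => v; rewrite !inE => /orP [/andP [_ ->]|/andP [-> _]]; by rewrite ?orbT.
  + move=> v Hv; split.
      have [[s Hs] _] := Hv2 v (in_setT v); by exists s; apply: inlab.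
    move: (Hv); rewrite inE => /orP [HvX|HvC]; last first.
      have -> : [set s | v \in lab s] = [set s | v \in hat s].
        apply/setP => s; rewrite !inE /lab; case: ifP => _; rewrite !inE ?HvC ?orbT ?andbT //.
        by rewrite (negbTE (CnX v HvC)) andFb orbF.
      exact: (Hv2 v (in_setT v)).2.
    apply: (@trim _ _ [set s | has (fun w => w \in hat s) (v :: f v)]) => //.
    * apply: (@union_conn2 _ _ _ _ e) => //.
      - move=> u; exact: (Hv2 u (in_setT u)).2.
      - move=> u; exact: (Hv2 u (in_setT u)).1.
      - move=> u w Huw; apply: Hv3 => //; exact: in_setT.
      - have [Hp _] := Hf v HvX; by apply: sub_path Hp => u w /andP [].
    * apply/subsetP => s; rewrite !inE /lab; case: ifP => _; rewrite !inE.
        by move=> /andP [Hs _]; apply/hasP; exists v => //; exact: mem_head.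
      move=> /orP [/andP [Hs _]| /andP [_ H]] //.
      by apply/hasP; exists v => //; exact: mem_head.
    * move=> s; rewrite !inE => Hs Hnl; rewrite /lab (negbTE Hnl) /=.
      by apply/setUP; right; rewrite inE HvX.
  + move=> u w Hu Hw Huw.
    have [s [s' [H1 H2 H3]]] := Hv3 u w (in_setT u) (in_setT w) Huw.
    by exists s, s'; split => //; apply: inlab.
- rewrite /lab eqxx andbF; apply/setP => v.
  case HvX: (v \in X).
    apply/setUP; right; rewrite inE HvX andTb; apply/hasP.
    exists (last v (f v)); [exact: mem_last | exact: (Hf v HvX).2].
  apply/negP => /setUP [/setIP [H1 H2]|]; last by rewrite inE HvX.
  have : v \in hat t :&: C by rewrite inE H1 H2.
  by rewrite HtC inE.
- move=> s Hl Hs; rewrite /lab Hl Hs /=; exact: subsetIl.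
- move=> s; rewrite /lab; case: ifP => _.
    by apply: subset_leq_card; exact: subsetIl.
  set Q := [set x in X | has (fun w => w \in hat s) (x :: f x)].
  apply: leq_trans (leq_card_setU _ _).1 _.
  rewrite -(cardsID C (hat s)) leq_add2l.
  pose phi := fun x => nth x (x :: f x) (find (fun w => w \in hat s) (x :: f x)).
  have phi_mem : forall x, x \in Q -> [/\ x \in X, phi x \in x :: f x & phi x \in hat s].
    move=> x; rewrite inE => /andP [HxX Hh]; split => //.
      by apply: mem_nth; rewrite -has_find.
    exact: (nth_find x Hh).
  have inj : {in Q &, injective phi}.
    move=> x y Hx Hy E; apply/eqP; apply/negPn/negP => Hxy.
    have [HxX H1 _] := phi_mem x Hx; have [HyX H2 _] := phi_mem y Hy.
    apply: (Hdf x y (phi x) HxX HyX Hxy H1); by rewrite E.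
  rewrite -(card_in_imset inj).
  apply: subset_leq_card; apply/subsetP => w /imsetP [x Hx ->].
  have [HxX H1 H2] := phi_mem x Hx.
  by rewrite !inE H2 andbT; apply: avoidC H1.
Qed.
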